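(* Let $\omega:\mathbb N\to[1,\infty)$ be a weight on $\mathbb N_{\min}$ with $\sup_n\min(\omega(n),\omega(n+1))=+\infty$. Then $(\ell^1_\omega(\mathbb N_{\min}),M_2(\mathbb C))$ is not an AMNM pair.
   Context: $\mathbb N_{\min}$ is the semilattice $\mathbb N$ with product $\min$; every $\omega:\mathbb N\to[1,\infty)$ is a submultiplicative weight on it. $\ell^1_\omega(\mathbb N_{\min})$ is the Banach space of $a:\mathbb N\to\mathbb C$ with $\|a\|=\sum_n|a(n)|\omega(n)<\infty$, with convolution $\delta_m*\delta_n=\delta_{\min(m,n)}$. $M_2(\mathbb C)$ has the operator norm. For a bounded linear $T:A\to B$ between Banach algebras, $\operatorname{def}(T)=\sup\{\|T(xy)-T(x)T(y)\|:\|x\|,\|y\|\le1\}$ and $\operatorname{Mult}(A,B)$ is the set of bounded multiplicative linear maps (including $0$). $(A,B)$ is an AMNM pair if for every $K>0$, $\varepsilon>0$ there is $\delta>0$ such that every bounded linear $T:A\to B$ with $\|T\|\le K$ and $\operatorname{def}(T)\le\delta$ satisfies $\operatorname{dist}(T,\operatorname{Mult}(A,B))\le\varepsilon$ in operator norm. *)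

(* Defs.v *)
From Stdlib Require Import Reals Classical ClassicalDescription ClassicalEpsilon.
Open Scope R_scope.

Definition C : Type := (R * R)%type.
Definition C0 : C := (0, 0).
Definition Cadd (z w : C) : C := (fst z + fst w, snd z + snd w).
Definition Copp (z : C) : C := (- fst z, - snd z).
Definition Cmul (z w : C) : C :=
  (fst z * fst w - snd z * snd w, fst z * snd w + snd z * fst w).
Definition Cmod (z : C) : R := sqrt (fst z ^ 2 + snd z ^ 2).

Definition Rsup (E : R -> Prop) : R :=
  match excluded_middle_informative (bound E /\ exists x, E x) with
  | left H => proj1_sig (completeness E (proj1 H) (proj2 H))
  | right _ => 0
  end.
Definition Rinf (E : R -> Prop) : R := - Rsup (fun x => E (- x)).

(* sum of a convergent real series (0 if it diverges) *)
Definition Rsum (u : nat -> R) : R :=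
  match excluded_middle_informative
          (exists l, Un_cv (fun N => sum_f_R0 u N) l) with
  | left H => proj1_sig (constructive_indefinite_description _ H)
  | right _ => 0
  end.
Definition Csum (u : nat -> C) : C :=
  (Rsum (fun n => fst (u n)), Rsum (fun n => snd (u n))).

Definition inL1 (w : nat -> R) (a : nat -> C) : Prop :=
  exists l, Un_cv (fun N => sum_f_R0 (fun n => Cmod (a n) * w n) N) l.
Definition l1norm (w : nat -> R) (a : nat -> C) : R :=
  Rsum (fun n => Cmod (a n) * w n).
Definition l1add (a b : nat -> C) : nat -> C := fun n => Cadd (a n) (b n).
Definition l1scal (c : C) (a : nat -> C) : nat -> C := fun n => Cmul c (a n).
(* convolution on N_min: delta_m * delta_n = delta_(min m n),
   i.e. (a*b)(k) = sum_{m,n : min m n = k} a(m) b(n) *)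
Definition conv (a b : nat -> C) : nat -> C := fun k =>
  Csum (fun m => Csum (fun n =>
    if Nat.eqb (Nat.min m n) k then Cmul (a m) (b n) else C0)).

Definition M2 : Type := ((C * C) * (C * C))%type.  (* ((a,b),(c,d)) = [a b; c d] *)
Definition V2 : Type := (C * C)%type.
Definition M2app (A : M2) (v : V2) : V2 :=
  let '((a, b), (c, d)) := A in
  (Cadd (Cmul a (fst v)) (Cmul b (snd v)), Cadd (Cmul c (fst v)) (Cmul d (snd v))).
Definition M2mul (A B : M2) : M2 :=
  let '((a, b), (c, d)) := A in
  let '((e, f), (g, h)) := B in
  ((Cadd (Cmul a e) (Cmul b g), Cadd (Cmul a f) (Cmul b h)),
   (Cadd (Cmul c e) (Cmul d g), Cadd (Cmul c f) (Cmul d h))).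
Definition M2add (A B : M2) : M2 :=
  let '((a, b), (c, d)) := A in
  let '((e, f), (g, h)) := B in
  ((Cadd a e, Cadd b f), (Cadd c g, Cadd d h)).
Definition M2opp (A : M2) : M2 :=
  let '((a, b), (c, d)) := A in ((Copp a, Copp b), (Copp c, Copp d)).
Definition M2sub (A B : M2) : M2 := M2add A (M2opp B).
Definition M2scal (z : C) (A : M2) : M2 :=
  let '((a, b), (c, d)) := A in ((Cmul z a, Cmul z b), (Cmul z c, Cmul z d)).
Definition V2norm (v : V2) : R := sqrt (Cmod (fst v) ^ 2 + Cmod (snd v) ^ 2).
Definition M2norm (A : M2) : R :=
  Rsup (fun r => exists v : V2, V2norm v <= 1 /\ r = V2norm (M2app A v)).

(** * Maps l^1_omega(N_min) -> M_2(C).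
   A map is a function on all sequences; only its values on l^1_omega matter. *)
Definition L1map : Type := (nat -> C) -> M2.

Definition is_bounded_linear (w : nat -> R) (T : L1map) : Prop :=
  (forall a b, inL1 w a -> inL1 w b -> T (l1add a b) = M2add (T a) (T b)) /\
  (forall c a, inL1 w a -> T (l1scal c a) = M2scal c (T a)) /\
  (exists K, forall a, inL1 w a -> M2norm (T a) <= K * l1norm w a).

Definition opnorm (w : nat -> R) (T : L1map) : R :=
  Rsup (fun r => exists a, inL1 w a /\ l1norm w a <= 1 /\ r = M2norm (T a)).

Definition defect (w : nat -> R) (T : L1map) : R :=
  Rsup (fun r => exists x y, inL1 w x /\ inL1 w y /\
          l1norm w x <= 1 /\ l1norm w y <= 1 /\
          r = M2norm (M2sub (T (conv x y)) (M2mul (T x) (T y)))).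

(* Mult(A,B): bounded multiplicative linear maps (including 0) *)
Definition is_mult (w : nat -> R) (S : L1map) : Prop :=
  is_bounded_linear w S /\
  forall a b, inL1 w a -> inL1 w b -> S (conv a b) = M2mul (S a) (S b).

Definition dist_mult (w : nat -> R) (T : L1map) : R :=
  Rinf (fun r => exists S, is_mult w S /\
          r = opnorm w (fun a => M2sub (T a) (S a))).

Definition AMNM_pair (w : nat -> R) : Prop :=
  forall K eps, 0 < K -> 0 < eps ->
  exists delta, 0 < delta /\
    forall T : L1map, is_bounded_linear w T ->
      opnorm w T <= K -> defect w T <= delta -> dist_mult w T <= eps.

(* Main.v *)
Require Import Defs.
From Stdlib Require Import Reals Lra Lia Classical FunctionalExtensionality ClassicalDescription ClassicalEpsilon.
From Coquelicot Require Import Rcomplements Rbar Lim_seq Hierarchy Series.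
From Coquelicot Require Complex.
Open Scope R_scope.

Lemma pair_eq {A B : Type} (a c : A) (b d : B) : a = c -> b = d -> (a, b) = (c, d).
Proof. intros; subst; reflexivity. Qed.

Ltac dC := repeat match goal with
  | z : Defs.C |- _ => destruct z
  | z : M2 |- _ => destruct z
  | z : (Defs.C * Defs.C)%type |- _ => destruct z
  end.
Ltac csolve := dC; cbv [Cadd Cmul Copp C0 M2add M2mul M2opp M2sub M2scal M2app fst snd];
  repeat (apply pair_eq); ring.

Lemma Cmod_nonneg z : 0 <= Cmod z.
Proof. apply sqrt_pos. Qed.
Lemma Cmod_add z w : Cmod (Cadd z w) <= Cmod z + Cmod w.
Proof. exact (Complex.Cmod_triangle z w). Qed.
Lemma Cmod_mul z w : Cmod (Cmul z w) = Cmod z * Cmod w.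
Proof. exact (Complex.Cmod_mult z w). Qed.
Lemma Cmod_opp z : Cmod (Copp z) = Cmod z.
Proof. exact (Complex.Cmod_opp z). Qed.
Lemma Cmod_C0 : Cmod C0 = 0.
Proof. unfold Cmod, C0; simpl. replace (0*(0*1)+0*(0*1)) with 0 by ring. apply sqrt_0. Qed.
Lemma Rabs_le_sqrt p q : Rabs p <= sqrt (p ^ 2 + q ^ 2).
Proof. rewrite <- sqrt_Rsqr_abs. apply sqrt_le_1_alt. unfold Rsqr. nra. Qed.
Lemma sqrt_le_sum p q : 0 <= p -> 0 <= q -> sqrt (p ^ 2 + q ^ 2) <= p + q.
Proof. intros. rewrite <- (sqrt_Rsqr (p+q)) by lra. apply sqrt_le_1_alt. unfold Rsqr. nra. Qed.
Lemma Cmod_fst z : Rabs (fst z) <= Cmod z.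
Proof. apply Rabs_le_sqrt. Qed.
Lemma Cmod_snd z : Rabs (snd z) <= Cmod z.
Proof. unfold Cmod. rewrite Rplus_comm. apply Rabs_le_sqrt. Qed.
Lemma Cmod_le_parts z : Cmod z <= Rabs (fst z) + Rabs (snd z).
Proof. unfold Cmod. rewrite <- (pow2_abs (fst z)), <- (pow2_abs (snd z)).
  apply sqrt_le_sum; apply Rabs_pos. Qed.
Lemma Cmod_real r : Cmod (r, 0) = Rabs r.
Proof. unfold Cmod; simpl. rewrite <- sqrt_Rsqr_abs. f_equal. unfold Rsqr; ring. Qed.

Lemma Cmul_eq0 z w : Cmul z w = C0 -> z = C0 \/ w = C0.
Proof.
  destruct z as [a b], w as [c d]; unfold Cmul, C0; simpl. intros H. injection H as H1 H2.
  destruct (Req_dec (a*a+b*b) 0) as [E|E].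
  - left. assert (a = 0) by nra. assert (b = 0) by nra. subst; reflexivity.
  - right. assert (Hc : (a*a+b*b) * c = 0) by (replace ((a*a+b*b)*c) with (a*(a*c-b*d)+b*(a*d+b*c)) by ring; rewrite H1, H2; ring).
    assert (Hd : (a*a+b*b) * d = 0) by (replace ((a*a+b*b)*d) with (a*(a*d+b*c)-b*(a*c-b*d)) by ring; rewrite H1, H2; ring).
    apply Rmult_integral in Hc; apply Rmult_integral in Hd.
    destruct Hc as [Hc|Hc]; [contradiction|]; destruct Hd as [Hd|Hd]; [contradiction|]; subst; reflexivity.
Qed.

Goal forall a b c : Defs.C, Cmul a (Cadd b c) = Cadd (Cmul a b) (Cmul a c).
intros. csolve. Qed.
Lemma Rsup_le (E : R -> Prop) K : (exists x, E x) -> (forall r, E r -> r <= K) -> Rsup E <= K.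
Proof.
  intros Hne Hub. unfold Rsup. destruct (excluded_middle_informative _) as [H|H].
  - destruct (completeness E _ _) as [l [Hl1 Hl2]]; simpl. apply Hl2. intros r Hr; auto.
  - exfalso. apply H. split; auto. exists K. intros r Hr; auto.
Qed.
Lemma Rsup_le0 (E : R -> Prop) K : 0 <= K -> (forall r, E r -> r <= K) -> Rsup E <= K.
Proof.
  intros HK Hub. unfold Rsup. destruct (excluded_middle_informative _) as [H|H].
  - destruct (completeness E _ _) as [l [Hl1 Hl2]]; simpl. apply Hl2. intros r Hr; auto.
  - lra.
Qed.
Lemma Rsup_ge (E : R -> Prop) K r : (forall r, E r -> r <= K) -> E r -> r <= Rsup E.
Proof.
  intros Hub Hr. unfold Rsup. destruct (excluded_middle_informative _) as [H|H].
  - destruct (completeness E _ _) as [l [Hl1 Hl2]]; simpl. apply Hl1; auto.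
  - exfalso. apply H. split; eauto. exists K. intros x Hx; auto.
Qed.

Lemma V2norm_fst v : Cmod (fst v) <= V2norm v.
Proof. unfold V2norm. rewrite <- (Rabs_pos_eq (Cmod (fst v))) at 1 by apply Cmod_nonneg. apply Rabs_le_sqrt. Qed.
Lemma V2norm_snd v : Cmod (snd v) <= V2norm v.
Proof. unfold V2norm. rewrite Rplus_comm. rewrite <- (Rabs_pos_eq (Cmod (snd v))) at 1 by apply Cmod_nonneg. apply Rabs_le_sqrt. Qed.
Lemma V2norm_le v : V2norm v <= Cmod (fst v) + Cmod (snd v).
Proof. apply sqrt_le_sum; apply Cmod_nonneg. Qed.

Lemma Cmod_lin a b x y : Cmod x <= 1 -> Cmod y <= 1 ->
  Cmod (Cadd (Cmul a x) (Cmul b y)) <= Cmod a + Cmod b.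
Proof.
  intros. eapply Rle_trans; [apply Cmod_add|]. rewrite !Cmod_mul.
  pose proof (Cmod_nonneg a); pose proof (Cmod_nonneg b); pose proof (Cmod_nonneg x); pose proof (Cmod_nonneg y). nra.
Qed.

Lemma M2app_bound (a b c d : Defs.C) v : V2norm v <= 1 ->
  V2norm (M2app ((a,b),(c,d)) v) <= Cmod a + Cmod b + Cmod c + Cmod d.
Proof.
  intros Hv. pose proof (V2norm_fst v); pose proof (V2norm_snd v).
  eapply Rle_trans; [apply V2norm_le|]. simpl.
  pose proof (Cmod_lin a b (fst v) (snd v)); pose proof (Cmod_lin c d (fst v) (snd v)). lra.
Qed.

Lemma M2norm_le (a b c d : Defs.C) : M2norm ((a,b),(c,d)) <= Cmod a + Cmod b + Cmod c + Cmod d.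
Proof.
  unfold M2norm. apply Rsup_le0.
  - pose proof (Cmod_nonneg a); pose proof (Cmod_nonneg b); pose proof (Cmod_nonneg c); pose proof (Cmod_nonneg d). lra.
  - intros r [v [Hv ->]]. apply M2app_bound; auto.
Qed.

Definition e1 : V2 := ((1,0), C0).
Definition e2 : V2 := (C0, (1,0)).
Lemma V2norm_e1 : V2norm e1 <= 1.
Proof. unfold V2norm, e1; simpl. rewrite Cmod_C0, Cmod_real, Rabs_R1.
  match goal with |- sqrt ?x <= 1 => replace x with 1 by ring end. rewrite sqrt_1; lra. Qed.
Lemma V2norm_e2 : V2norm e2 <= 1.
Proof. unfold V2norm, e2; simpl. rewrite Cmod_C0, Cmod_real, Rabs_R1.
  match goal with |- sqrt ?x <= 1 => replace x with 1 by ring end. rewrite sqrt_1; lra. Qed.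

Lemma M2norm_ge (a b c d : Defs.C) :
  Cmod a <= M2norm ((a,b),(c,d)) /\ Cmod b <= M2norm ((a,b),(c,d)) /\
  Cmod c <= M2norm ((a,b),(c,d)) /\ Cmod d <= M2norm ((a,b),(c,d)).
Proof.
  assert (Hb : forall r, (exists v, V2norm v <= 1 /\ r = V2norm (M2app ((a,b),(c,d)) v)) ->
                r <= Cmod a + Cmod b + Cmod c + Cmod d).
  { intros r [v [Hv ->]]. apply M2app_bound; auto. }
  assert (H1 : V2norm (M2app ((a,b),(c,d)) e1) <= M2norm ((a,b),(c,d))).
  { eapply Rsup_ge; [exact Hb|]. exists e1; split; auto using V2norm_e1. }
  assert (H2 : V2norm (M2app ((a,b),(c,d)) e2) <= M2norm ((a,b),(c,d))).
  { eapply Rsup_ge; [exact Hb|]. exists e2; split; auto using V2norm_e2. }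
  assert (E1 : M2app ((a,b),(c,d)) e1 = (a, c)) by (unfold M2app, e1; csolve).
  assert (E2 : M2app ((a,b),(c,d)) e2 = (b, d)) by (unfold M2app, e2; csolve).
  rewrite E1 in H1; rewrite E2 in H2.
  pose proof (V2norm_fst (a,c)); pose proof (V2norm_snd (a,c));
  pose proof (V2norm_fst (b,d)); pose proof (V2norm_snd (b,d)); simpl in *. lra.
Qed.
Definition M0 : M2 := ((C0, C0), (C0, C0)).
Definition M1 : M2 := (((1,0), C0), (C0, (1,0))).
Definition tr (M : M2) : Defs.C := let '((a, b), (c, d)) := M in Cadd a d.

Lemma C_one_minus t : Cadd t (Copp (1,0)) = C0 -> t = (1,0).
Proof. destruct t as [x y]; unfold Cadd, Copp, C0; simpl; intros H; injection H as H1 H2.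
  apply pair_eq; lra. Qed.

Lemma idem_scalar x : Cmul x x = x -> x = C0 \/ x = (1,0).
Proof.
  intros H. assert (E : Cmul x (Cadd x (Copp (1,0))) = C0).
  { replace (Cmul x (Cadd x (Copp (1,0)))) with (Cadd (Cmul x x) (Copp x)) by csolve.
    rewrite H. csolve. }
  apply Cmul_eq0 in E. destruct E as [E|E]; auto. right. apply C_one_minus; auto.
Qed.

Lemma idem_cases M : M2mul M M = M -> M = M0 \/ M = M1 \/ tr M = (1,0).
Proof.
  destruct M as [[a b] [c d]]. intros H. cbv [M2mul] in H. injection H as H1 H2 H3 H4.
  destruct (classic (Cadd a d = (1,0))) as [Ht|Ht]; [right; right; exact Ht|].
  assert (Eb : Cmul (Cadd (Cadd a d) (Copp (1,0))) b = C0).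
  { replace (Cmul (Cadd (Cadd a d) (Copp (1,0))) b) with (Cadd (Cadd (Cmul a b) (Cmul b d)) (Copp b)) by csolve.
    rewrite H2. csolve. }
  assert (Ec : Cmul (Cadd (Cadd a d) (Copp (1,0))) c = C0).
  { replace (Cmul (Cadd (Cadd a d) (Copp (1,0))) c) with (Cadd (Cadd (Cmul c a) (Cmul d c)) (Copp c)) by csolve.
    rewrite H3. csolve. }
  apply Cmul_eq0 in Eb; apply Cmul_eq0 in Ec.
  destruct Eb as [Eb|Eb]; [apply C_one_minus in Eb; contradiction|].
  destruct Ec as [Ec|Ec]; [apply C_one_minus in Ec; contradiction|].
  subst b c.
  assert (Ha : Cmul a a = a) by (transitivity (Cadd (Cmul a a) (Cmul C0 C0)); [csolve|exact H1]).
  assert (Hd : Cmul d d = d) by (transitivity (Cadd (Cmul C0 C0) (Cmul d d)); [csolve|exact H4]).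
  apply idem_scalar in Ha; apply idem_scalar in Hd.
  destruct Ha as [-> | ->]; destruct Hd as [-> | ->].
  - left; reflexivity.
  - exfalso; apply Ht; csolve.
  - exfalso; apply Ht; csolve.
  - right; left; reflexivity.
Qed.

Lemma idem_chain A B : M2mul A A = A -> M2mul B B = B -> M2mul A B = A -> M2mul B A = A ->
  A = M0 \/ A = B \/ B = M1.
Proof.
  intros HA HB HAB HBA.
  assert (HC : M2mul (M2sub B A) (M2sub B A) = M2sub B A).
  { replace (M2mul (M2sub B A) (M2sub B A)) with
      (M2sub (M2sub (M2add (M2mul B B) (M2mul A A)) (M2mul B A)) (M2mul A B)) by csolve.
    rewrite HA, HB, HAB, HBA. csolve. }
  assert (HAC : M2mul A (M2sub B A) = M0).
  { replace (M2mul A (M2sub B A)) with (M2sub (M2mul A B) (M2mul A A)) by csolve.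
    rewrite HAB, HA. unfold M0. csolve. }
  assert (Htr : tr B = Cadd (tr A) (tr (M2sub B A))) by (unfold tr; csolve).
  destruct (idem_cases A HA) as [E|[E|E]]; [left; exact E| |].
  - right; right. rewrite E in HBA. rewrite <- HBA. unfold M1. csolve.
  - destruct (idem_cases _ HC) as [E2|[E2|E2]].
    + right; left. replace B with (M2add A (M2sub B A)) by csolve. rewrite E2. unfold M0. csolve.
    + left. rewrite E2 in HAC. rewrite <- HAC. unfold M1. csolve.
    + right; right. destruct (idem_cases B HB) as [E3|[E3|E3]]; auto; exfalso.
      * rewrite E, E2 in Htr. subst B. unfold tr, M0, C0, Cadd in Htr. simpl in Htr. injection Htr. lra.
      * rewrite E, E2, E3 in Htr. unfold Cadd in Htr. simpl in Htr. injection Htr. lra.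
Qed.
Definition rind (k : nat) (u : nat -> R) (m : nat) : R := if Nat.leb k m then u m else 0.
Definition rpt (k : nat) (v : R) (m : nat) : R := if Nat.eqb m k then v else 0.

Lemma is_series_Un (a : nat -> R) l : is_series a l -> Un_cv (sum_f_R0 a) l.
Proof. intros H; apply is_lim_seq_Reals. eapply is_lim_seq_ext; [intros; apply sum_n_Reals|]. exact H. Qed.
Lemma Un_is_series (a : nat -> R) l : Un_cv (sum_f_R0 a) l -> is_series a l.
Proof. intros H; apply is_lim_seq_Reals in H. eapply is_lim_seq_ext in H; [|intros; symmetry; apply sum_n_Reals]. exact H. Qed.

Lemma Rsum_lim u l : Un_cv (sum_f_R0 u) l -> Rsum u = l.
Proof.
  intros H. unfold Rsum. destruct (excluded_middle_informative _) as [H'|H'].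
  - destruct (constructive_indefinite_description _ _) as [l' Hl']; simpl.
    eapply UL_sequence; eauto.
  - exfalso; apply H'; eauto.
Qed.
Lemma Rsum_Series u : ex_series u -> Rsum u = Series u.
Proof. intros H. apply Rsum_lim. apply is_series_Un. apply Series_correct; auto. Qed.

Lemma ex_le (u b : nat -> R) : (forall m, Rabs (u m) <= b m) -> ex_series b -> ex_series u.
Proof. intros. apply (@ex_series_le R_AbsRing R_CompleteNormedModule u b); auto. Qed.
Lemma aex_bound (u b : nat -> R) : (forall m, Rabs (u m) <= b m) -> ex_series b ->
  ex_series (fun m => Rabs (u m)).
Proof. intros H Hb. apply (ex_le _ b); auto. intros m. rewrite Rabs_Rabsolu; auto. Qed.
Lemma aex_ex u : ex_series (fun m => Rabs (u m)) -> ex_series u.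
Proof. apply ex_series_Rabs. Qed.

Lemma sum_rpt k v N : sum_f_R0 (rpt k v) N = if Nat.leb k N then v else 0.
Proof.
  induction N; simpl.
  - unfold rpt. destruct k; simpl; reflexivity.
  - rewrite IHN. unfold rpt. destruct (Nat.leb_spec k N); destruct (Nat.eqb_spec (S N) k);
    destruct (Nat.leb_spec k (S N)); try lia; lra.
Qed.
Lemma is_series_rpt k v : is_series (rpt k v) v.
Proof.
  apply Un_is_series. intros eps Heps. exists k. intros N HN. rewrite sum_rpt.
  destruct (Nat.leb_spec k N); [|lia]. unfold R_dist. rewrite Rminus_diag, Rabs_R0; lra.
Qed.
Lemma Series_rpt k v : Series (rpt k v) = v.
Proof. apply is_series_unique, is_series_rpt. Qed.
Lemma ex_rpt k v : ex_series (rpt k v).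
Proof. exists v; apply is_series_rpt. Qed.
Lemma aex_rpt k v : ex_series (fun m => Rabs (rpt k v m)).
Proof. apply (aex_bound _ (rpt k (Rabs v))); [|apply ex_rpt]. intros m; unfold rpt.
  destruct (Nat.eqb m k); [lra| rewrite Rabs_R0; lra]. Qed.

Lemma aex_rind k u : ex_series (fun m => Rabs (u m)) -> ex_series (fun m => Rabs (rind k u m)).
Proof. intros H. apply (aex_bound _ (fun m => Rabs (u m))); auto. intros m; unfold rind.
  destruct (Nat.leb k m); [lra| rewrite Rabs_R0; apply Rabs_pos]. Qed.

Lemma rind_split k u : ex_series (fun m => Rabs (u m)) ->
  Series (rind k u) = u k + Series (rind (S k) u).
Proof.
  intros H. rewrite <- (Series_rpt k (u k)). rewrite <- Series_plus.
  - apply Series_ext. intros m. unfold rind, rpt.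
    destruct (Nat.leb_spec k m); destruct (Nat.eqb_spec m k); destruct (Nat.leb_spec (S k) m);
      subst; try lia; lra.
  - apply ex_rpt.
  - apply aex_ex, aex_rind; auto.
Qed.

Lemma Series_rind0 u : Series (rind 0 u) = Series u.
Proof. apply Series_ext; intros; reflexivity. Qed.

Lemma Series_partial u k : ex_series (fun m => Rabs (u m)) ->
  Series u = sum_f_R0 u k + Series (rind (S k) u).
Proof.
  intros H. induction k.
  - rewrite <- Series_rind0. rewrite (rind_split 0 u H). simpl; ring.
  - rewrite IHk. rewrite (rind_split (S k) u H). simpl; ring.
Qed.

Lemma tail_to_0 u : ex_series (fun m => Rabs (u m)) -> is_lim_seq (fun k => Series (rind k u)) 0.
Proof.
  intros H. apply is_lim_seq_incr_1.
  assert (Hs : is_lim_seq (sum_f_R0 u) (Series u)).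
  { apply is_lim_seq_Reals. apply is_series_Un. apply Series_correct, aex_ex; auto. }
  apply (is_lim_seq_ext (fun k => Series u - sum_f_R0 u k)).
  - intros k. rewrite (Series_partial u k H). ring.
  - replace 0 with (Series u - Series u) by ring.
    apply is_lim_seq_minus'; [apply is_lim_seq_const|exact Hs].
Qed.
Definition acex (u : nat -> Defs.C) := ex_series (fun m => Cmod (u m)).
Definition ind (k : nat) (a : nat -> Defs.C) (m : nat) : Defs.C := if Nat.leb k m then a m else C0.
Definition cpt (k : nat) (v : Defs.C) (m : nat) : Defs.C := if Nat.eqb m k then v else C0.
Definition tl (k : nat) (a : nat -> Defs.C) : Defs.C :=
  (Series (rind k (fun m => fst (a m))), Series (rind k (fun m => snd (a m)))).

Lemma aex_fst u : acex u -> ex_series (fun m => Rabs (fst (u m))).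
Proof. intros H. apply (aex_bound _ (fun m => Cmod (u m))); auto. intros; apply Cmod_fst. Qed.
Lemma aex_snd u : acex u -> ex_series (fun m => Rabs (snd (u m))).
Proof. intros H. apply (aex_bound _ (fun m => Cmod (u m))); auto. intros; apply Cmod_snd. Qed.

Lemma Csum_eq u : acex u -> Csum u = (Series (fun m => fst (u m)), Series (fun m => snd (u m))).
Proof. intros H. unfold Csum. rewrite !Rsum_Series; auto using aex_ex, aex_fst, aex_snd. Qed.

Lemma acex_bound u (b : nat -> R) : (forall m, Cmod (u m) <= b m) -> ex_series b -> acex u.
Proof. intros H Hb. unfold acex. apply (ex_le _ b); auto. intros m. rewrite Rabs_pos_eq; auto using Cmod_nonneg. Qed.

Lemma acex_ind k a : acex a -> acex (ind k a).
Proof. intros H. apply (acex_bound _ (fun m => Cmod (a m))); auto. intros m; unfold ind.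
  destruct (Nat.leb k m); [lra| rewrite Cmod_C0; apply Cmod_nonneg]. Qed.
Lemma acex_pt k v : acex (cpt k v).
Proof. apply (acex_bound _ (rpt k (Cmod v))); [|apply ex_rpt]. intros m; unfold cpt, rpt.
  destruct (Nat.eqb m k); [lra| rewrite Cmod_C0; lra]. Qed.
Lemma acex_scal c u : acex u -> acex (fun m => Cmul c (u m)).
Proof. intros H. apply (acex_bound _ (fun m => Cmod c * Cmod (u m))).
  - intros m; rewrite Cmod_mul; lra.
  - exact (ex_series_scal_l (Cmod c) _ H). Qed.
Lemma acex_add u v : acex u -> acex v -> acex (fun m => Cadd (u m) (v m)).
Proof. intros H1 H2. apply (acex_bound _ (fun m => Cmod (u m) + Cmod (v m))).
  - intros m; apply Cmod_add.
  - exact (ex_series_plus _ _ H1 H2). Qed.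

Lemma Csum_ext u v : (forall m, u m = v m) -> Csum u = Csum v.
Proof. intros H. replace v with u; auto. apply functional_extensionality; auto. Qed.

Lemma Csum_add u v : acex u -> acex v -> Csum (fun m => Cadd (u m) (v m)) = Cadd (Csum u) (Csum v).
Proof.
  intros H1 H2. rewrite !Csum_eq; auto using acex_add. unfold Cadd; simpl.
  rewrite <- !Series_plus; auto using aex_ex, aex_fst, aex_snd.
Qed.
Lemma Csum_scal c u : acex u -> Csum (fun m => Cmul c (u m)) = Cmul c (Csum u).
Proof.
  intros H. rewrite !Csum_eq; auto using acex_scal. unfold Cmul; simpl.
  pose proof (aex_ex _ (aex_fst _ H)); pose proof (aex_ex _ (aex_snd _ H)).
  rewrite <- !Series_scal_l. rewrite <- Series_minus, <- Series_plus;
    try (exact (ex_series_scal_l _ _ H0)); try (exact (ex_series_scal_l _ _ H1)); reflexivity.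
Qed.
Lemma Csum_pt k v : Csum (cpt k v) = v.
Proof.
  rewrite Csum_eq by apply acex_pt. destruct v as [x y]. apply pair_eq.
  - transitivity (Series (rpt k x)); [|apply Series_rpt]. apply Series_ext; intros m; unfold cpt, rpt; destruct (Nat.eqb m k); reflexivity.
  - transitivity (Series (rpt k y)); [|apply Series_rpt]. apply Series_ext; intros m; unfold cpt, rpt; destruct (Nat.eqb m k); reflexivity.
Qed.
Lemma Csum_zero : Csum (fun _ => C0) = C0.
Proof. transitivity (Csum (cpt 0 C0)); [|apply Csum_pt]. apply Csum_ext. intros m; unfold cpt; destruct (Nat.eqb m 0); reflexivity. Qed.

Lemma Csum_ind k a : acex a -> Csum (ind k a) = tl k a.
Proof.
  intros H. rewrite Csum_eq by (apply acex_ind; auto). unfold tl. apply pair_eq; apply Series_ext;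
    intros m; unfold ind, rind; destruct (Nat.leb k m); reflexivity.
Qed.

Lemma tl_split k a : acex a -> tl k a = Cadd (a k) (tl (S k) a).
Proof. intros H. unfold tl, Cadd; simpl. rewrite (rind_split k (fun m => fst (a m))), (rind_split k (fun m => snd (a m)));
  auto using aex_fst, aex_snd. Qed.

Lemma tl_add k a b : acex a -> acex b -> tl k (l1add a b) = Cadd (tl k a) (tl k b).
Proof.
  intros Ha Hb. unfold tl, Cadd, l1add; simpl. apply pair_eq; rewrite <- Series_plus;
  try (apply aex_ex, aex_rind; auto using aex_fst, aex_snd);
  apply Series_ext; intros m; unfold rind; destruct (Nat.leb k m); simpl; ring.
Qed.
Lemma tl_scal k c a : acex a -> tl k (l1scal c a) = Cmul c (tl k a).
Proof.
  intros Ha. unfold tl, Cmul, l1scal; simpl.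
  assert (E1 := aex_ex _ (aex_rind k _ (aex_fst _ Ha))). assert (E2 := aex_ex _ (aex_rind k _ (aex_snd _ Ha))).
  apply pair_eq; rewrite <- !Series_scal_l.
  - rewrite <- Series_minus; try (exact (ex_series_scal_l _ _ E1)); try (exact (ex_series_scal_l _ _ E2)).
    apply Series_ext; intros m; unfold rind; destruct (Nat.leb k m); simpl; ring.
  - rewrite <- Series_plus; try (exact (ex_series_scal_l _ _ E1)); try (exact (ex_series_scal_l _ _ E2)).
    apply Series_ext; intros m; unfold rind; destruct (Nat.leb k m); simpl; ring.
Qed.
Lemma inL1_ex w a : inL1 w a -> ex_series (fun n => Cmod (a n) * w n).
Proof. intros [l Hl]. exists l. apply Un_is_series; auto. Qed.
Lemma l1norm_eq w a : inL1 w a -> l1norm w a = Series (fun n => Cmod (a n) * w n).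
Proof. intros H. unfold l1norm. apply Rsum_Series, inL1_ex; auto. Qed.
Lemma inL1_acex w a : (forall n, 1 <= w n) -> inL1 w a -> acex a.
Proof. intros hw H. apply (acex_bound _ (fun n => Cmod (a n) * w n)); [|apply inL1_ex; auto].
  intros m. pose proof (Cmod_nonneg (a m)); pose proof (hw m); nra. Qed.
Lemma l1norm_nonneg w a : (forall n, 1 <= w n) -> inL1 w a -> 0 <= l1norm w a.
Proof. intros hw H. rewrite l1norm_eq; auto. apply Rle_trans with (Series (rpt 0 0)).
  - rewrite Series_rpt; lra.
  - apply Series_le; [|apply inL1_ex; auto]. intros m; unfold rpt.
    pose proof (Cmod_nonneg (a m)); pose proof (hw m). destruct (Nat.eqb m 0); split; nra. Qed.
Lemma coord_bound w a k : (forall n, 1 <= w n) -> inL1 w a -> Cmod (a k) * w k <= l1norm w a.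
Proof.
  intros hw H. rewrite l1norm_eq; auto. rewrite <- (Series_rpt k (Cmod (a k) * w k)).
  apply Series_le; [|apply inL1_ex; auto]. intros m; unfold rpt.
  pose proof (Cmod_nonneg (a m)); pose proof (hw m).
  destruct (Nat.eqb_spec m k); subst; split; nra.
Qed.
Lemma tl_part_bound w (u : nat -> R) a k : (forall n, 1 <= w n) -> inL1 w a ->
  (forall m, Rabs (u m) <= Cmod (a m)) -> ex_series (fun m => Rabs (u m)) ->
  Rabs (Series (rind k u)) <= l1norm w a.
Proof.
  intros hw H Hu Hex. eapply Rle_trans; [apply Series_Rabs, aex_rind; auto|].
  rewrite l1norm_eq; auto. apply Series_le; [|apply inL1_ex; auto].
  intros m. unfold rind. pose proof (Hu m); pose proof (Cmod_nonneg (a m)); pose proof (hw m).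
  destruct (Nat.leb k m); split; try apply Rabs_pos; try rewrite Rabs_R0; nra.
Qed.
Lemma tl_bound w a k : (forall n, 1 <= w n) -> inL1 w a -> Cmod (tl k a) <= 2 * l1norm w a.
Proof.
  intros hw H. pose proof (inL1_acex w a hw H) as Ha.
  eapply Rle_trans; [apply Cmod_le_parts|]. unfold tl; simpl.
  pose proof (tl_part_bound w (fun m => fst (a m)) a k hw H (fun m => Cmod_fst (a m)) (aex_fst _ Ha)).
  pose proof (tl_part_bound w (fun m => snd (a m)) a k hw H (fun m => Cmod_snd (a m)) (aex_snd _ Ha)).
  lra.
Qed.
Lemma conv_formula x y j : acex x -> acex y ->
  conv x y j = Cadd (Cmul (x j) (tl j y)) (Cmul (y j) (tl (S j) x)).
Proof.
  intros Hx Hy. unfold conv.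
  assert (Hin : forall m, Csum (fun p => if Nat.eqb (Nat.min m p) j then Cmul (x m) (y p) else C0)
                = Cadd (cpt j (Cmul (x j) (tl j y)) m) (Cmul (y j) (ind (S j) x m))).
  { intros m. destruct (Nat.lt_total m j) as [Hlt|[Heq|Hgt]].
    - rewrite (Csum_ext _ (fun _ => C0)), Csum_zero.
      + unfold cpt, ind. destruct (Nat.eqb_spec m j); [lia|]. destruct (Nat.leb_spec (S j) m); [lia|]. csolve.
      + intros p. destruct (Nat.eqb_spec (Nat.min m p) j); [lia|reflexivity].
    - subst m. rewrite (Csum_ext _ (fun p => Cmul (x j) (ind j y p))), Csum_scal, Csum_ind; auto using acex_ind.
      + unfold cpt, ind. rewrite Nat.eqb_refl. destruct (Nat.leb_spec (S j) j); [lia|]. csolve.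
      + intros p. unfold ind. destruct (Nat.eqb_spec (Nat.min j p) j); destruct (Nat.leb_spec j p); try lia; csolve.
    - rewrite (Csum_ext _ (cpt j (Cmul (x m) (y j)))), Csum_pt.
      + unfold cpt, ind. destruct (Nat.eqb_spec m j); [lia|]. destruct (Nat.leb_spec (S j) m); [|lia]. csolve.
      + intros p. unfold cpt. destruct (Nat.eqb_spec (Nat.min m p) j) as [E1|E1]; destruct (Nat.eqb_spec p j) as [E2|E2]; try lia; try rewrite E2; reflexivity. }
  rewrite (Csum_ext _ _ Hin). rewrite Csum_add, Csum_pt, Csum_scal, Csum_ind; auto using acex_pt, acex_scal, acex_ind.
Qed.

Lemma rind_fst_if k (a : nat -> Defs.C) m : rind k (fun m => fst (a m)) m = fst (if Nat.leb k m then a m else C0).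
Proof. unfold rind; destruct (Nat.leb k m); reflexivity. Qed.
Lemma rind_snd_if k (a : nat -> Defs.C) m : rind k (fun m => snd (a m)) m = snd (if Nat.leb k m then a m else C0).
Proof. unfold rind; destruct (Nat.leb k m); reflexivity. Qed.

Definition cps k x y N : Defs.C :=
  (sum_f_R0 (rind k (fun m => fst (conv x y m))) N, sum_f_R0 (rind k (fun m => snd (conv x y m))) N).

Lemma cps_formula k x y N : acex x -> acex y ->
  cps k x y N = Cadd (Cmul (tl k x) (tl k y))
     (Copp (Cmul (tl (Nat.max k (S N)) x) (tl (Nat.max k (S N)) y))).
Proof.
  intros Hx Hy. induction N.
  - unfold cps. cbn [sum_f_R0]. unfold rind. destruct k.
    + cbn [Nat.leb Nat.max]. rewrite (conv_formula x y 0 Hx Hy).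
      rewrite (tl_split 0 x Hx), (tl_split 0 y Hy). csolve.
    + cbn [Nat.leb]. replace (Nat.max (S k) 1) with (S k) by lia. csolve.
  - transitivity (Cadd (cps k x y N) (if Nat.leb k (S N) then conv x y (S N) else C0)).
    { unfold cps. cbn [sum_f_R0]. rewrite (rind_fst_if k (conv x y)), (rind_snd_if k (conv x y)).
      unfold Cadd; cbn [fst snd]; reflexivity. }
    rewrite IHN. destruct (Nat.leb_spec k (S N)).
    + replace (Nat.max k (S N)) with (S N) by lia. replace (Nat.max k (S (S N))) with (S (S N)) by lia.
      rewrite (conv_formula x y (S N) Hx Hy). rewrite (tl_split (S N) x Hx), (tl_split (S N) y Hy). csolve.
    + replace (Nat.max k (S N)) with k by lia. replace (Nat.max k (S (S N))) with k by lia. csolve.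
Qed.

Lemma tl_lim_fst k x : acex x -> is_lim_seq (fun N => fst (tl (Nat.max k (S N)) x)) 0.
Proof.
  intros Hx. apply (is_lim_seq_ext_loc (fun N => Series (rind (S N) (fun m => fst (x m))))).
  - exists k. intros N HN. unfold tl; simpl. replace (Nat.max k (S N)) with (S N) by lia. reflexivity.
  - apply (is_lim_seq_incr_1 (fun N => Series (rind N (fun m => fst (x m))))). apply tail_to_0, aex_fst; auto.
Qed.
Lemma tl_lim_snd k x : acex x -> is_lim_seq (fun N => snd (tl (Nat.max k (S N)) x)) 0.
Proof.
  intros Hx. apply (is_lim_seq_ext_loc (fun N => Series (rind (S N) (fun m => snd (x m))))).
  - exists k. intros N HN. unfold tl; simpl. replace (Nat.max k (S N)) with (S N) by lia. reflexivity.
  - apply (is_lim_seq_incr_1 (fun N => Series (rind N (fun m => snd (x m))))). apply tail_to_0, aex_snd; auto.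
Qed.

Lemma lim_sub_0 (u v : nat -> R) c : (forall N, u N = c - v N) -> is_lim_seq v 0 -> is_lim_seq u c.
Proof. intros H Hv. apply (is_lim_seq_ext (fun N => c - v N)); [intros; rewrite H; reflexivity|].
  assert (H0 : is_lim_seq (fun N => c - v N) (c - 0)) by (apply is_lim_seq_minus'; auto; apply is_lim_seq_const).
  rewrite Rminus_0_r in H0. exact H0. Qed.

Lemma tl_conv k x y : acex x -> acex y -> tl k (conv x y) = Cmul (tl k x) (tl k y).
Proof.
  intros Hx Hy.
  pose proof (tl_lim_fst k x Hx) as A1; pose proof (tl_lim_snd k x Hx) as A2;
  pose proof (tl_lim_fst k y Hy) as B1; pose proof (tl_lim_snd k y Hy) as B2.
  unfold tl at 1. apply pair_eq; apply is_series_unique; apply Un_is_series; apply is_lim_seq_Reals.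
  - apply (lim_sub_0 _ (fun N => fst (tl (Nat.max k (S N)) x) * fst (tl (Nat.max k (S N)) y)
                  - snd (tl (Nat.max k (S N)) x) * snd (tl (Nat.max k (S N)) y))).
    + intros N. transitivity (fst (cps k x y N)); [reflexivity|]. rewrite cps_formula by auto. csolve.
    + replace 0 with (0 * 0 - 0 * 0) by ring. apply is_lim_seq_minus'; apply is_lim_seq_mult'; auto.
  - apply (lim_sub_0 _ (fun N => fst (tl (Nat.max k (S N)) x) * snd (tl (Nat.max k (S N)) y)
                  + snd (tl (Nat.max k (S N)) x) * fst (tl (Nat.max k (S N)) y))).
    + intros N. transitivity (snd (cps k x y N)); [reflexivity|]. rewrite cps_formula by auto. csolve.
    + replace 0 with (0 * 0 + 0 * 0) by ring. apply is_lim_seq_plus'; apply is_lim_seq_mult'; auto.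
Qed.
Definition Tn (w : nat -> R) (n : nat) (a : nat -> Defs.C) : M2 :=
  ((tl (S (S n)) a, Cadd (Cmul (w n, 0) (a n)) (Copp (Cmul (w (S n), 0) (a (S n))))),
   (C0, Cadd (Cadd (a n) (a (S n))) (tl (S (S n)) a))).

Definition esum (M : M2) : R := let '((a, b), (c, d)) := M in Cmod a + Cmod b + Cmod c + Cmod d.

Lemma M2norm_esum M : M2norm M <= esum M.
Proof. destruct M as [[a b] [c d]]. apply M2norm_le. Qed.

Lemma Cmod_real_pos r : 0 <= r -> Cmod (r, 0) = r.
Proof. intros. rewrite Cmod_real, Rabs_pos_eq; auto. Qed.

Lemma T_esum w n a : (forall n, 1 <= w n) -> inL1 w a -> esum (Tn w n a) <= 8 * l1norm w a.
Proof.
  intros hw H. unfold Tn, esum.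
  pose proof (tl_bound w a (S (S n)) hw H).
  pose proof (coord_bound w a n hw H); pose proof (coord_bound w a (S n) hw H).
  pose proof (Cmod_nonneg (a n)); pose proof (Cmod_nonneg (a (S n))); pose proof (hw n); pose proof (hw (S n)).
  assert (H12 : Cmod (Cadd (Cmul (w n, 0) (a n)) (Copp (Cmul (w (S n), 0) (a (S n))))) <= 2 * l1norm w a).
  { eapply Rle_trans; [apply Cmod_add|]. rewrite Cmod_opp, !Cmod_mul, !Cmod_real_pos by lra. nra. }
  assert (H22 : Cmod (Cadd (Cadd (a n) (a (S n))) (tl (S (S n)) a)) <= 4 * l1norm w a).
  { eapply Rle_trans; [apply Cmod_add|]. pose proof (Cmod_add (a n) (a (S n))). nra. }
  rewrite Cmod_C0. lra.
Qed.

Lemma T_bl w n : (forall n, 1 <= w n) -> is_bounded_linear w (Tn w n).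
Proof.
  intros hw. split; [|split].
  - intros a b Ha Hb. unfold Tn. rewrite !tl_add by (eapply inL1_acex; eauto). unfold l1add. csolve.
  - intros c a Ha. unfold Tn. rewrite !tl_scal by (eapply inL1_acex; eauto). unfold l1scal. csolve.
  - exists 8. intros a Ha. eapply Rle_trans; [apply M2norm_esum|]. apply T_esum; auto.
Qed.

Lemma T_opnorm w n : (forall n, 1 <= w n) -> opnorm w (Tn w n) <= 8.
Proof.
  intros hw. unfold opnorm. apply Rsup_le0; [lra|]. intros r [a [Ha [Hl ->]]].
  eapply Rle_trans; [apply M2norm_esum|]. eapply Rle_trans; [apply T_esum; auto|]. lra.
Qed.

Lemma T_defect w n : (forall n, 1 <= w n) -> defect w (Tn w n) <= / w n + / w (S n).
Proof.
  intros hw. pose proof (hw n); pose proof (hw (S n)).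
  unfold defect. apply Rsup_le0.
  { assert (0 < / w n) by (apply Rinv_0_lt_compat; lra). assert (0 < / w (S n)) by (apply Rinv_0_lt_compat; lra). lra. }
  intros r [x [y [Hx [Hy [Hlx [Hly ->]]]]]].
  pose proof (inL1_acex w x hw Hx) as Ax; pose proof (inL1_acex w y hw Hy) as Ay.
  assert (E : M2sub (Tn w n (conv x y)) (M2mul (Tn w n x) (Tn w n y)) =
     ((C0, Cmul (w n + w (S n), 0) (Cmul (x (S n)) (y n))), (C0, C0))).
  { unfold Tn. rewrite tl_conv by auto. rewrite !conv_formula by auto.
    rewrite (tl_split n y Ay), (tl_split (S n) y Ay), (tl_split (S n) x Ax). csolve. }
  rewrite E. eapply Rle_trans; [apply M2norm_le|]. rewrite !Cmod_C0, !Cmod_mul, Cmod_real_pos by lra.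
  pose proof (coord_bound w x (S n) hw Hx); pose proof (coord_bound w y n hw Hy).
  set (p := Cmod (x (S n))) in *. set (q := Cmod (y n)) in *.
  assert (0 <= p) by apply Cmod_nonneg. assert (0 <= q) by apply Cmod_nonneg.
  assert (Hp : p <= / w (S n)). { apply (Rmult_le_reg_r (w (S n))); [lra|]. rewrite Rinv_l by lra. lra. }
  assert (Hq : q <= / w n). { apply (Rmult_le_reg_r (w n)); [lra|]. rewrite Rinv_l by lra. lra. }
  assert ((w n + w (S n)) * (p * q) <= p + q) by nra.
  lra.
Qed.
Lemma inL1_cpt w k v : inL1 w (cpt k v).
Proof.
  exists (Cmod v * w k). apply is_series_Un.
  apply (is_series_ext (rpt k (Cmod v * w k))); [|apply is_series_rpt].
  intros m; unfold rpt, cpt. destruct (Nat.eqb_spec m k); subst; [reflexivity|]. rewrite Cmod_C0; symmetry; apply Rmult_0_l.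
Qed.
Lemma l1norm_cpt w k v : l1norm w (cpt k v) = Cmod v * w k.
Proof.
  unfold l1norm. apply Rsum_lim. apply is_series_Un.
  apply (is_series_ext (rpt k (Cmod v * w k))); [|apply is_series_rpt].
  intros m; unfold rpt, cpt. destruct (Nat.eqb_spec m k); subst; [reflexivity|]. rewrite Cmod_C0; symmetry; apply Rmult_0_l.
Qed.
Lemma tl_cpt j k v : tl j (cpt k v) = if Nat.leb j k then v else C0.
Proof.
  unfold tl. destruct v as [v1 v2]. destruct (Nat.leb_spec j k).
  - apply pair_eq.
    + transitivity (Series (rpt k v1)); [|apply Series_rpt]. apply Series_ext. intros m; unfold rind, rpt, cpt.
      destruct (Nat.eqb_spec m k); destruct (Nat.leb_spec j m); subst; try lia; reflexivity.
    + transitivity (Series (rpt k v2)); [|apply Series_rpt]. apply Series_ext. intros m; unfold rind, rpt, cpt.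
      destruct (Nat.eqb_spec m k); destruct (Nat.leb_spec j m); subst; try lia; reflexivity.
  - unfold C0; apply pair_eq.
    + transitivity (Series (rpt k 0)); [|apply Series_rpt]. apply Series_ext. intros m; unfold rind, rpt, cpt.
      destruct (Nat.eqb_spec m k); destruct (Nat.leb_spec j m); subst; try lia; reflexivity.
    + transitivity (Series (rpt k 0)); [|apply Series_rpt]. apply Series_ext. intros m; unfold rind, rpt, cpt.
      destruct (Nat.eqb_spec m k); destruct (Nat.leb_spec j m); subst; try lia; reflexivity.
Qed.

Definition one : Defs.C := (1, 0).

Lemma conv_dd p q n : (p = n /\ q = n) \/ (p = n /\ q = S n) \/ (p = S n /\ q = n) ->
  conv (cpt p one) (cpt q one) = cpt n one.
Proof.
  intros Hpq. apply functional_extensionality. intros j.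
  rewrite conv_formula by apply acex_pt. rewrite !tl_cpt. unfold cpt.
  destruct Hpq as [[-> ->]|[[-> ->]|[-> ->]]];
  destruct (Nat.eqb_spec j n); destruct (Nat.eqb_spec j (S n)); destruct (Nat.leb_spec j n);
  destruct (Nat.leb_spec j (S n)); destruct (Nat.leb_spec (S j) n); destruct (Nat.leb_spec (S j) (S n));
  try lia; unfold one; csolve.
Qed.
Definition ent12 (M : M2) : Defs.C := snd (fst M).
Lemma M2norm_ge12 M : Cmod (ent12 M) <= M2norm M.
Proof. destruct M as [[a b] [c d]]. apply M2norm_ge. Qed.
Lemma ent12_sub X Y : ent12 (M2sub X Y) = Cadd (ent12 X) (Copp (ent12 Y)).
Proof. destruct X as [[a b] [c d]], Y as [[e f] [g h]]; reflexivity. Qed.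
Lemma ent12_scal z X : ent12 (M2scal z X) = Cmul z (ent12 X).
Proof. destruct X as [[a b] [c d]]; reflexivity. Qed.

Lemma M2norm_sub_bound X Y : M2norm (M2sub X Y) <= esum X + 4 * M2norm Y.
Proof.
  destruct X as [[a b] [c d]], Y as [[e f] [g h]].
  pose proof (M2norm_ge e f g h) as [G1 [G2 [G3 G4]]].
  eapply Rle_trans; [apply M2norm_le|]. unfold esum.
  pose proof (Cmod_add a (Copp e)); pose proof (Cmod_add b (Copp f));
  pose proof (Cmod_add c (Copp g)); pose proof (Cmod_add d (Copp h)).
  rewrite !Cmod_opp in *. lra.
Qed.

Lemma mult_zero w : is_mult w (fun _ => M0).
Proof.
  split; [split; [|split]|].
  - intros; unfold M0; csolve.
  - intros; unfold M0; csolve.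
  - exists 0. intros a Ha. eapply Rle_trans; [apply M2norm_le|]. rewrite !Cmod_C0. lra.
  - intros; unfold M0; csolve.
Qed.

Lemma C_nz r : r <> 0 -> (r, 0) <> C0.
Proof. intros H E. unfold C0 in E. injection E. auto. Qed.

Lemma dist_T w n Sm : (forall n, 1 <= w n) -> is_mult w Sm ->
  1/2 <= opnorm w (fun a => M2sub (Tn w n a) (Sm a)).
Proof.
  intros hw [[Hadd [Hsc [KS HKS]]] Hmul].
  pose proof (hw n) as Hc; pose proof (hw (S n)) as Hc'.
  assert (Hbd : forall r, (exists x, inL1 w x /\ l1norm w x <= 1 /\ r = M2norm (M2sub (Tn w n x) (Sm x))) ->
                 r <= 8 + 4 * Rabs KS).
  { intros r [x [Hx [Hl ->]]]. eapply Rle_trans; [apply M2norm_sub_bound|].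
    pose proof (T_esum w n x hw Hx). pose proof (HKS x Hx). pose proof (l1norm_nonneg w x hw Hx).
    pose proof (Rle_abs KS). pose proof (Rabs_pos KS).
    assert (KS * l1norm w x <= Rabs KS * l1norm w x) by (apply Rmult_le_compat_r; auto).
    assert (Rabs KS * l1norm w x <= Rabs KS * 1) by (apply Rmult_le_compat_l; auto).
    set (p := KS * l1norm w x) in *. set (q := Rabs KS * l1norm w x) in *. lra. }
  set (a := cpt n (/ (w n), 0)). set (b := cpt (S n) (/ (w (S n)), 0)).
  assert (La : l1norm w a <= 1).
  { unfold a. rewrite l1norm_cpt, Cmod_real_pos. rewrite Rinv_l; lra.
    apply Rlt_le, Rinv_0_lt_compat; lra. }
  assert (Lb : l1norm w b <= 1).
  { unfold b. rewrite l1norm_cpt, Cmod_real_pos. rewrite Rinv_l; lra.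
    apply Rlt_le, Rinv_0_lt_compat; lra. }
  assert (Ea : M2norm (M2sub (Tn w n a) (Sm a)) <= opnorm w (fun a => M2sub (Tn w n a) (Sm a))).
  { unfold opnorm. eapply Rsup_ge; [exact Hbd|]. exists a; split; [apply inL1_cpt|split; auto]. }
  assert (Eb : M2norm (M2sub (Tn w n b) (Sm b)) <= opnorm w (fun a => M2sub (Tn w n a) (Sm a))).
  { unfold opnorm. eapply Rsup_ge; [exact Hbd|]. exists b; split; [apply inL1_cpt|split; auto]. }
  apply Rnot_lt_le; intros Hlt.
  pose proof (M2norm_ge12 (M2sub (Tn w n a) (Sm a))) as Fa.
  pose proof (M2norm_ge12 (M2sub (Tn w n b) (Sm b))) as Fb.
  rewrite ent12_sub in Fa, Fb.
  assert (Ta : ent12 (Tn w n a) = (1, 0)).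
  { unfold ent12, Tn, a, cpt; cbn [fst snd]. rewrite Nat.eqb_refl. rewrite (proj2 (Nat.eqb_neq (S n) n)) by lia.
    unfold Cadd, Cmul, Copp, C0; simpl. apply pair_eq; field; lra. }
  assert (Tb : ent12 (Tn w n b) = (-1, 0)).
  { unfold ent12, Tn, b, cpt; cbn [fst snd]. rewrite Nat.eqb_refl. rewrite (proj2 (Nat.eqb_neq n (S n))) by lia.
    unfold Cadd, Cmul, Copp, C0; simpl. apply pair_eq; field; lra. }
  rewrite Ta in Fa; rewrite Tb in Fb.
  assert (Fa' : Cmod (Cadd (1, 0) (Copp (ent12 (Sm a)))) < 1/2) by lra.
  assert (Fb' : Cmod (Cadd (-1, 0) (Copp (ent12 (Sm b)))) < 1/2) by lra.
  clear Fa Fb Ea Eb Hlt.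
  assert (DA : cpt n one = l1scal ((w n), 0) a).
  { apply functional_extensionality; intros m. unfold l1scal, a, cpt, one.
    destruct (Nat.eqb m n). - unfold Cmul; simpl; apply pair_eq; field; lra. - csolve. }
  assert (DB : cpt (S n) one = l1scal ((w (S n)), 0) b).
  { apply functional_extensionality; intros m. unfold l1scal, b, cpt, one.
    destruct (Nat.eqb m (S n)). - unfold Cmul; simpl; apply pair_eq; field; lra. - csolve. }
  assert (HA : Sm (cpt n one) = M2scal ((w n), 0) (Sm a)) by (rewrite DA; apply Hsc; apply inL1_cpt).
  assert (HB : Sm (cpt (S n) one) = M2scal ((w (S n)), 0) (Sm b)) by (rewrite DB; apply Hsc; apply inL1_cpt).
  assert (M1' : M2mul (Sm (cpt n one)) (Sm (cpt n one)) = Sm (cpt n one)).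
  { rewrite <- Hmul by apply inL1_cpt. rewrite (conv_dd n n n); auto. }
  assert (M2' : M2mul (Sm (cpt (S n) one)) (Sm (cpt (S n) one)) = Sm (cpt (S n) one)).
  { rewrite <- Hmul by apply inL1_cpt. rewrite (conv_dd (S n) (S n) (S n)); auto. }
  assert (M3' : M2mul (Sm (cpt n one)) (Sm (cpt (S n) one)) = Sm (cpt n one)).
  { rewrite <- Hmul by apply inL1_cpt. rewrite (conv_dd n (S n) n); auto. }
  assert (M4' : M2mul (Sm (cpt (S n) one)) (Sm (cpt n one)) = Sm (cpt n one)).
  { rewrite <- Hmul by apply inL1_cpt. rewrite (conv_dd (S n) n n); auto. }
  destruct (idem_chain _ _ M1' M2' M3' M4') as [E|[E|E]].
  - apply (f_equal ent12) in E. rewrite HA, ent12_scal in E. change (ent12 M0) with C0 in E.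
    apply Cmul_eq0 in E. destruct E as [E|E]; [apply (C_nz (w n)); auto; lra|].
    rewrite E in Fa'. replace (Cadd (1,0) (Copp C0)) with ((1,0) : Defs.C) in Fa' by csolve.
    rewrite Cmod_real_pos in Fa'; lra.
  - apply (f_equal ent12) in E. rewrite HA, HB, !ent12_scal in E.
    destruct (ent12 (Sm a)) as [s1 s2]; destruct (ent12 (Sm b)) as [t1 t2].
    unfold Cmul in E; simpl in E. injection E as E1 E2.
    pose proof (Cmod_fst (Cadd (1, 0) (Copp (s1, s2)))) as G1.
    pose proof (Cmod_fst (Cadd (-1, 0) (Copp (t1, t2)))) as G2.
    simpl in G1, G2.
    assert (K1 : Rabs (1 + - s1) < 1/2) by lra. assert (K2 : Rabs (-1 + - t1) < 1/2) by lra.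
    apply Rabs_def2 in K1; apply Rabs_def2 in K2. nra.
  - apply (f_equal ent12) in E. rewrite HB, ent12_scal in E. change (ent12 M1) with C0 in E.
    apply Cmul_eq0 in E. destruct E as [E|E]; [apply (C_nz (w (S n))); auto; lra|].
    rewrite E in Fb'. replace (Cadd (-1,0) (Copp C0)) with ((-1,0) : Defs.C) in Fb' by csolve.
    rewrite Cmod_real in Fb'. rewrite Rabs_left in Fb' by lra. lra.
Qed.

Theorem theoremt (w : nat -> R)
  (hw : forall n, 1 <= w n)
  (hsup : forall M : R, exists n, M < Rmin (w n) (w (S n))) :
  ~ AMNM_pair w.
Proof.
  intros H. destruct (H 8 (1/4)) as [delta [Hd HT]]; try lra.
  destruct (hsup (2 / delta)) as [n Hn].
  pose proof (Rmin_l (w n) (w (S n))); pose proof (Rmin_r (w n) (w (S n))).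
  assert (W1 : 2 / delta < w n) by lra. assert (W2 : 2 / delta < w (S n)) by lra.
  assert (I1 : / w n < delta / 2).
  { pose proof (hw n). assert (w n * delta > 2).
    { apply (Rmult_lt_compat_r delta) in W1; auto. unfold Rdiv in W1. rewrite Rmult_assoc, Rinv_l in W1; lra. }
    assert (0 < / w n) by (apply Rinv_0_lt_compat; lra).
    assert (/ w n * w n = 1) by (apply Rinv_l; lra). nra. }
  assert (I2 : / w (S n) < delta / 2).
  { pose proof (hw (S n)). assert (w (S n) * delta > 2).
    { apply (Rmult_lt_compat_r delta) in W2; auto. unfold Rdiv in W2. rewrite Rmult_assoc, Rinv_l in W2; lra. }
    assert (0 < / w (S n)) by (apply Rinv_0_lt_compat; lra).
    assert (/ w (S n) * w (S n) = 1) by (apply Rinv_l; lra). nra. }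
  specialize (HT (Tn w n) (T_bl w n hw) (T_opnorm w n hw)).
  assert (Hdef : defect w (Tn w n) <= delta) by (pose proof (T_defect w n hw); lra).
  specialize (HT Hdef).
  assert (Hdist : 1/2 <= dist_mult w (Tn w n)).
  { unfold dist_mult, Rinf.
    assert (Rsup (fun x => exists S, is_mult w S /\ - x = opnorm w (fun a => M2sub (Tn w n a) (S a))) <= - (1/2)).
    { apply Rsup_le.
      - exists (- opnorm w (fun a => M2sub (Tn w n a) M0)). exists (fun _ => M0).
        split; [apply mult_zero|]. rewrite Ropp_involutive; reflexivity.
      - intros r [Sm [HS Hr]]. pose proof (dist_T w n Sm hw HS). lra. }
    lra. }
  lra.
Qed.
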